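(* Let $a, b, n$ be positive integers with $b>1$, $n>1$ and $\gcd(r_b(n),a)=1$. Then the set of pseudo-Frobenius numbers of $S_a(b,n)$ is \[\operatorname{PF}(S_a(b,n)) = \{(n-i+1)\,(b^n - 1 - a) + a\, r_b(n) \mid i = 2,\ldots,n\},\] and consequently the type of $S_a(b,n)$ equals $n-1$.
   Context: For $\ell \ge 1$, $r_b(\ell) = \sum_{j=0}^{\ell-1} b^j$, and $r_b(0)=0$. For $i \ge 1$, $a_i := r_b(n) + a\, r_b(i-1)$; $S_a(b,n)$ is the numerical semigroup generated by $\{a_i\}$. An integer $x$ is a pseudo-Frobenius number of a numerical semigroup $S$ if $x \notin S$ and $x + s \in S$ for all $s \in S\setminus\{0\}$; $\operatorname{PF}(S)$ is the set of these, and the type $\operatorname{t}(S)$ is its cardinality. *)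

(* Defs.v *)
From mathcomp Require Import all_boot all_order all_algebra.
Set Implicit Arguments. Unset Strict Implicit. Unset Printing Implicit Defensive.
Import Order.TTheory GRing.Theory Num.Theory.

Definition rb (b l : nat) : nat := \sum_(j < l) b ^ j.

(* generator a_i = r_b(n) + a * r_b(i-1), meaningful for i >= 1 *)
Definition gen (a b n i : nat) : nat := rb b n + a * rb b i.-1.

Inductive inS (a b n : nat) : nat -> Prop :=
  | inS0 : inS a b n 0
  | inS_add x i : 0 < i -> inS a b n x -> inS a b n (x + gen a b n i).

Definition inSZ (a b n : nat) (x : int) : Prop :=
  exists m : nat, x = Posz m /\ inS a b n m.

Definition pseudo_frobenius (a b n : nat) (x : int) : Prop :=
  ~ inSZ a b n x /\ forall s : nat, inS a b n s -> s <> 0%N -> inSZ a b n (x + Posz s)%R.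

Definition has_type (a b n k : nat) : Prop :=
  exists s : seq int, uniq s /\ (forall x, pseudo_frobenius a b n x <-> x \in s)
                      /\ size s = k.

(* Main.v *)
Require Import Defs.
From mathcomp Require Import all_boot all_order all_algebra.
Import GRing.Theory Num.Theory.
From mathcomp Require Import zify ring.
Import GRing.Theory Num.Theory.
Set Implicit Arguments. Unset Strict Implicit.
Set Implicit Arguments. Unset Strict Implicit.

Lemma rbS b q : rb b q.+1 = b * rb b q + 1.
Proof.
rewrite /rb big_ord_recl expn0 addnC; congr (_ + _).
rewrite big_distrr /=; apply: eq_bigr => i _; by rewrite expnS.
Qed.

Lemma rb0 b : rb b 0 = 0.
Proof. by rewrite /rb big_ord0. Qed.

Lemma rb_pow b q : 0 < b -> (b - 1) * rb b q + 1 = b ^ q.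
Proof.
move=> b0; elim: q => [|q IH]; first by rewrite rb0 muln0.
rewrite rbS expnS -IH; nia.
Qed.

Lemma rb_ge b q : 0 < b -> q <= rb b q.
Proof.
move=> b0; elim: q => [|q IH]; first by [].
rewrite rbS; nia.
Qed.

Definition repsum b k t := exists l : seq nat, size l = k /\ t = \sum_(q <- l) rb b q.

Lemma repsum0 b : repsum b 0 0.
Proof. by exists [::]; rewrite big_nil. Qed.

Lemma repsum_add b k t k' t' : repsum b k t -> repsum b k' t' -> repsum b (k + k') (t + t').
Proof.
move=> [l [<- ->]] [l' [<- ->]]; exists (l ++ l'); by rewrite size_cat big_cat.
Qed.

Lemma repsum_nseq b c q : repsum b c (c * rb b q).
Proof.
exists (nseq c q); split; first by rewrite size_nseq.
elim: c => [|c IH]; first by rewrite big_nil.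
by rewrite /= big_cons -IH mulSn.
Qed.

Lemma repsum_pad b k t c : repsum b k t -> repsum b (k + c) t.
Proof.
move=> H; have := repsum_add H (repsum_nseq b c 0); by rewrite rb0 muln0 addn0.
Qed.

Lemma repsum_eq b k t k' t' : repsum b k t -> k = k' -> t = t' -> repsum b k' t'.
Proof. by move=> H <- <-. Qed.

Lemma rep_sub b m L : 0 < b -> m <= L -> repsum b (m * (b - 1) + 1) (rb b L - m).
Proof.
move=> b0; elim: m L => [|m IH] L hL.
  by rewrite subn0; exists [:: L]; rewrite big_seq1.
case: L hL => [|L] //= hL.
have h := rb_ge L b0.
apply: (repsum_eq (repsum_add (repsum_nseq b (b - 1) L) (IH L hL))); first nia.
rewrite rbS; nia.
Qed.

Lemma rep_self b L : 0 < b -> repsum b (L * (b - 1)) (rb b L - L).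
Proof.
move=> b0; elim: L => [|L IH]; first by rewrite rb0; exact: repsum0.
have h := rb_ge L b0.
apply: (repsum_eq (repsum_add (repsum_nseq b (b - 1) L) IH)); first nia.
rewrite rbS; nia.
Qed.

Lemma inS_add_closed a b n x y : inS a b n x -> inS a b n y -> inS a b n (x + y).
Proof.
move=> Hx; elim => [|z i hi _ IH]; first by rewrite addn0.
by rewrite addnA; apply: inS_add.
Qed.

Lemma inS_rep a b n k t : repsum b k t -> inS a b n (k * rb b n + a * t).
Proof.
move=> [l [<- ->]]; elim: l => [|q l IH]; first by rewrite big_nil muln0; exact: inS0.
rewrite big_cons /=.
have -> : (size l).+1 * rb b n + a * (rb b q + \sum_(j <- l) rb b j)
   = (size l * rb b n + a * \sum_(j <- l) rb b j) + gen a b n q.+1 by rewrite /gen /=; nia.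
by apply: inS_add.
Qed.

Lemma rep_inS a b n x : inS a b n x -> exists k t, repsum b k t /\ x = k * rb b n + a * t.
Proof.
elim => [|y i hi _ [k [t [[l [hl ht]] ->]]]]; first by exists 0, 0; split; [exact: repsum0 | rewrite muln0].
exists k.+1, (t + rb b i.-1); split.
  exists (rcons l i.-1); by rewrite size_rcons hl -cats1 big_cat big_seq1 ht.
rewrite /gen; nia.
Qed.

Definition Wt b n (f : nat -> nat) := \sum_(e < n) f e * b ^ e.
Definition Sm n (f : nat -> nat) := \sum_(e < n) f e.

Lemma sum_ind n c (F : nat -> nat) : c < n -> \sum_(e < n) (e == c :> nat) * F e = F c.
Proof.
move=> hc; rewrite (bigD1 (Ordinal hc)) //= eqxx /= mul1n big1 ?addn0 //.
move=> i hi; case: eqP => [h|] /=; last by rewrite mul0n.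
have hh : i = Ordinal hc by apply: val_inj.
by rewrite hh eqxx in hi.
Qed.

Lemma sum_ind1 n c : c < n -> \sum_(e < n) (e == c :> nat) = 1.
Proof. move=> hc; have := sum_ind (fun _ => 1) hc; by under eq_bigr do rewrite muln1. Qed.

Lemma fold_base b n f K : 1 < b ->
  (forall e, e < n -> f e < b) -> (b ^ n - 1) %| Wt b n f + K -> 0 < Sm n f + K ->
  n * (b - 1) <= Sm n f + K.
Proof.
move=> b1 hf hd hp.
set h := fun e => b - 1 - f e.
have e1 : Sm n f + Sm n h = n * (b - 1).
  rewrite /Sm -big_split /= -[n in n * _]card_ord -sum_nat_const.
  apply: eq_bigr => i _; have := hf i (ltn_ord i); rewrite /h; lia.
have e2 : Wt b n f + Wt b n h = b ^ n - 1.
  rewrite /Wt -big_split /= -(rb_pow n (ltnW b1)) addnK /rb big_distrr /=.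
  apply: eq_bigr => i _; have := hf i (ltn_ord i); rewrite /h -mulnDl; move=> ?; congr (_ * _); lia.
have l1 : Sm n h <= Wt b n h.
  apply: leq_sum => i _; by rewrite leq_pmulr // expn_gt0; lia.
have l2 : Sm n f <= Wt b n f.
  apply: leq_sum => i _; by rewrite leq_pmulr // expn_gt0; lia.
case: (leqP (Sm n h) K) => hK; first lia.
have := dvdn_leq _ hd; lia.
Qed.

Lemma fold_step b n f e K : 1 < b -> 1 < n -> e < n -> b <= f e ->
  (b ^ n - 1) %| Wt b n f + K ->
  exists g, [/\ Sm n g + (b - 1) = Sm n f, (b ^ n - 1) %| Wt b n g + K & 0 < Sm n g].
Proof.
move=> b1 n1 en hfe hd.
set e' := e.+1 %% n.
have e'n : e' < n by rewrite ltn_mod; lia.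
have ne : e' != e.
  rewrite /e'; case: (ltnP e.+1 n) => h; first by rewrite modn_small //; lia.
  have -> : e.+1 = n by lia.
  by rewrite modnn; lia.
set g := fun x => f x + (x == e') - b * (x == e).
have pw : forall x, g x + b * (x == e) = f x + (x == e').
  move=> x; rewrite /g subnK //; case: eqP => [->|_]; last by rewrite muln0.
  by rewrite muln1; lia.
exists g.
have s1 : Sm n g + b = Sm n f + 1.
  have H : \sum_(x < n) (g x + b * (x == e :> nat)) = \sum_(x < n) (f x + (x == e' :> nat)).
    by apply: eq_bigr => x _; exact: pw.
  rewrite !big_split /= -big_distrr /= !sum_ind1 // muln1 in H; exact: H.
have s2 : Wt b n g + b ^ e.+1 = Wt b n f + b ^ e'.
  have H : \sum_(x < n) (g x * b ^ x + b * ((x == e :> nat) * b ^ x)) = \sum_(x < n) (f x * b ^ x + (x == e' :> nat) * b ^ x).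
    by apply: eq_bigr => x _; rewrite mulnA -!mulnDl pw.
  rewrite !big_split /= -big_distrr /= !sum_ind // -expnS in H; exact: H.
split.
- lia.
- case: (ltnP e.+1 n) => h.
    move: s2; rewrite /e' modn_small // => /addIn ->; done.
  have een : e.+1 = n by lia.
  move: s2; rewrite /e' een modnn expn0 => s2.
  have : Wt b n f + K = (Wt b n g + K) + (b ^ n - 1).
    have : 1 <= b ^ n by rewrite expn_gt0; lia.
    lia.
  move=> E; rewrite E in hd; rewrite (dvdn_addl _ (dvdnn _)) in hd; done.
- have := leq_bigmax_cond; rewrite /Sm (bigD1 (Ordinal e'n)) //=.
  rewrite /g eqxx (negbTE ne) muln0 subn0; lia.
Qed.

Lemma fold_vec b n N : 1 < b -> 1 < n -> forall f K, Sm n f <= N ->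
  (b ^ n - 1) %| Wt b n f + K -> 0 < Sm n f + K -> n * (b - 1) <= Sm n f + K.
Proof.
move=> b1 n1; elim: N => [|N IH] f K hN hd hp.
  apply: fold_base => // e he; apply: (@leq_ltn_trans 0) => //; last lia.
  move: hN; rewrite leqn0 /Sm (bigD1 (Ordinal he)) //= addn_eq0 => /andP [/eqP -> _] //.
case: (boolP [exists e : 'I_n, b <= f e]) => [/existsP [e he]|hall].
  have [g [s1 s2 s3]] := fold_step b1 n1 (ltn_ord e) he hd.
  have := IH g K ltac:(lia) s2 ltac:(lia); lia.
apply: fold_base => // e he; rewrite ltnNge; apply/negP => hb.
by move/existsP: hall; apply; exists (Ordinal he).
Qed.

Lemma powmod b n q : 1 < b -> 0 < n -> b ^ q = b ^ (q %% n) %[mod b ^ n - 1].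
Proof.
move=> b1 n0; set B := b ^ n - 1.
have hB : b ^ n = 1 + B by rewrite /B subnKC // expn_gt0; lia.
rewrite {1}(divn_eq q n) [q %/ n * n]mulnC expnD expnM hB -modnMm -modnXm modnDr modnXm exp1n modnMm mul1n.
done.
Qed.

Lemma list_vec b n (l : seq nat) : 1 < b -> 0 < n ->
  exists f, Sm n f = size l /\ \sum_(q <- l) b ^ q = Wt b n f %[mod b ^ n - 1].
Proof.
move=> b1 n0; elim: l => [|q l [f [h1 h2]]].
  exists (fun _ => 0); rewrite /Sm /Wt big_nil !big1 //.
exists (fun e => (e == q %% n) + f e); split.
  by rewrite /Sm big_split /= sum_ind1 ?ltn_mod // -/(Sm n f) h1.
rewrite /Wt big_cons (eq_bigr (fun e : 'I_n => (e == q %% n :> nat) * b ^ e + f e * b ^ e)); last by move=> i _; rewrite mulnDl.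
rewrite big_split /= sum_ind ?ltn_mod // -/(Wt b n f).
by rewrite -modnDm h2 (powmod q b1 n0) modnDm.
Qed.

Lemma fold_list b n (l : seq nat) K : 1 < b -> 1 < n ->
  (b ^ n - 1) %| \sum_(q <- l) b ^ q + K -> 0 < size l + K -> n * (b - 1) <= size l + K.
Proof.
move=> b1 n1 hd hp.
have [f [h1 h2]] := list_vec l b1 (ltnW n1).
rewrite -h1; apply: (@fold_vec b n (Sm n f)) => //; last by rewrite h1.
by rewrite /dvdn -modnDml -h2 modnDml.
Qed.

Lemma rb_pows b (l : seq nat) : 0 < b ->
  (b - 1) * \sum_(q <- l) rb b q + size l = \sum_(q <- l) b ^ q.
Proof.
move=> b0; elim: l => [|q l IH]; first by rewrite !big_nil muln0.
rewrite !big_cons /= -IH -(rb_pow q b0); lia.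
Qed.

Lemma notin_P a b n j : 0 < a -> 1 < b -> 1 < n -> coprime (rb b n) a -> 0 < j < n ->
  ~ inS a b n (j * (b - 1) * rb b n + a * (rb b n - j)).
Proof.
move=> a0 b1 n1 cop hj H.
have [k [t [[l [hl ht]] E]]] := rep_inS H.
have hR : n <= rb b n by apply: rb_ge; lia.
set R := rb b n in E hR cop.
have [hk hd] : k <= j * (b - 1) /\ R %| t + j.
  case: (leqP k (j * (b - 1))) => hk.
    have ht1 : R - j <= t.
      rewrite leqNgt; apply/negP => ht1.
      have : a * t < a * (R - j) by rewrite ltn_pmul2l.
      have : k * R <= j * (b - 1) * R by rewrite leq_mul2r hk orbT.
      lia.
    have e1 : a * (t + j - R) = (j * (b - 1) - k) * R.
      rewrite mulnBr mulnBl; move: E; rewrite mulnBr; lia.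
    split => //.
    have : R %| a * (t + j - R) by rewrite e1 dvdn_mull.
    rewrite Gauss_dvdr // => h.
    have -> : t + j = (t + j - R) + R by lia.
    by rewrite dvdn_addl.
  exfalso.
  have ht1 : t < R - j.
    rewrite ltnNge; apply/negP => ht1.
    have : a * (R - j) <= a * t by rewrite leq_mul2l ht1 orbT.
    have : j * (b - 1) * R < k * R by rewrite ltn_pmul2r //; lia.
    lia.
  have e1 : a * (R - j - t) = (k - j * (b - 1)) * R.
    rewrite mulnBr mulnBl; move: E; rewrite mulnBr; lia.
  have : R %| a * (R - j - t) by rewrite e1 dvdn_mull.
  rewrite Gauss_dvdr // => h.
  have := dvdn_leq _ h; lia.
set K := j * (b - 1) - k.
have hB : b ^ n - 1 = (b - 1) * R by rewrite -(rb_pow n (ltnW b1)) addnK.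
have hM : \sum_(q <- l) b ^ q + K = (b - 1) * (t + j).
  rewrite -(rb_pows l (ltnW b1)) -ht hl /K; lia.
have := @fold_list b n l K b1 n1.
have hj0 : 0 < j * (b - 1) by rewrite muln_gt0; lia.
have hjn : j * (b - 1) < n * (b - 1) by rewrite ltn_pmul2r; lia.
rewrite hM hB dvdn_mul // hl /K => /(_ isT ltac:(lia)).
lia.
Qed.

Lemma P_gen a b n j q : 1 < b -> 0 < j < n ->
  inS a b n (j * (b - 1) * rb b n + a * (rb b n - j) + gen a b n q.+1).
Proof.
move=> b1 hj.
have hR : n <= rb b n by apply: rb_ge; lia.
have hq : q <= rb b q by apply: rb_ge; lia.
rewrite /gen /=.
case: (leqP j q) => hjq.
  have Hr := repsum_pad a (rep_sub (ltnW b1) hjq).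
  have e1 : a * (rb b n - j) + a * rb b q = a * rb b n + a * (rb b q - j).
    have h1 : a * j <= a * rb b n by apply: leq_mul => //; lia.
    have h2 : a * j <= a * rb b q by apply: leq_mul => //; lia.
    rewrite !mulnBr; lia.
  have H := inS_rep a n Hr.
  have E : (j * (b - 1) + 1 + a) * rb b n + a * (rb b q - j) = j * (b - 1) * rb b n + a * (rb b n - j) + (rb b n + a * rb b q).
    rewrite !mulnDl mul1n; lia.
  by rewrite -E.
have Hr := repsum_add (@rep_sub b (j - q) n (ltnW b1) ltac:(lia)) (rep_self q (ltnW b1)).
have e1 : a * (rb b n - (j - q) + (rb b q - q)) = a * (rb b n - j) + a * rb b q.
  rewrite -mulnDr; congr (_ * _); lia.
have := inS_rep a n Hr; rewrite e1.
have -> : (j - q) * (b - 1) + 1 + q * (b - 1) = j * (b - 1) + 1.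
  by rewrite addnAC -mulnDl subnK //; lia.
rewrite mulnDl mul1n.
suff -> : j * (b - 1) * rb b n + rb b n + (a * (rb b n - j) + a * rb b q) = j * (b - 1) * rb b n + a * (rb b n - j) + (rb b n + a * rb b q) by [].
lia.
Qed.

Lemma P_plus a b n j s : 1 < b -> 0 < j < n -> inS a b n s -> s <> 0 ->
  inS a b n (j * (b - 1) * rb b n + a * (rb b n - j) + s).
Proof.
move=> b1 hj H; case: H => [//|x i hi hx] _.
case: i hi hx => [//|q] _ hx.
rewrite (_ : _ + (x + _) = (j * (b - 1) * rb b n + a * (rb b n - j) + gen a b n q.+1) + x); last lia.
apply: inS_add_closed => //; exact: (P_gen a q b1 hj).
Qed.

Lemma skew b L : 1 < b -> forall m, m < rb b L.+2 ->
  exists j k1 k2, [/\ 0 < j <= L.+1, k1 + k2 = j * (b - 1) + 1, repsum b k1 m,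
     repsum b k2 (rb b L.+2 - j - m) & j + m <= rb b L.+2].
Proof.
move=> b1; elim: L => [|L IH] m hm.
  have e2 : rb b 2 = b + 1 by rewrite !rbS rb0; lia.
  rewrite e2 in hm *.
  exists 1, m, (b - m); split => //; first lia.
    by apply: (repsum_eq (repsum_nseq b m 1)); rewrite ?rbS ?rb0 //=; lia.
  by apply: (repsum_eq (repsum_nseq b (b - m) 1)); rewrite ?rbS ?rb0 //=; lia.
set Q := rb b L.+2.
have hQ : L.+2 <= Q by apply: rb_ge; lia.
have e3 : rb b L.+3 = b * Q + 1 by rewrite rbS.
rewrite e3 in hm *.
have hdm := divn_eq m Q.
set q := m %/ Q in hdm; set m' := m %% Q in hdm.
have hm' : m' < Q by rewrite ltn_mod; lia.
case: (ltnP q b) => hqb.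
  have [j [k1 [k2 [hj hk h1 h2 h3]]]] := IH m' hm'.
  rewrite -/Q in h2 h3.
  exists j.+1, (k1 + q), (k2 + (b - 1 - q)); split.
  - lia.
  - have : j.+1 * (b - 1) = j * (b - 1) + (b - 1) by rewrite mulSn addnC.
    lia.
  - apply: (repsum_eq (repsum_add h1 (repsum_nseq b q L.+2))) => //; rewrite -/Q; lia.
  - apply: (repsum_eq (repsum_add h2 (repsum_nseq b (b - 1 - q) L.+2))) => //; rewrite -/Q.
    have : (b - 1 - q) * Q + q * Q + Q = b * Q.
      have -> : b * Q = ((b - 1 - q) + q + 1) * Q by congr (_ * _); lia.
      by rewrite !mulnDl mul1n.
    move=> HH; rewrite hdm; move: HH h3.
    move: ((b - 1 - q) * Q) (q * Q) (b * Q) => X Y Z; lia.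
  - have : q * Q + Q <= b * Q by rewrite -mulSnr leq_mul2r; lia.
    lia.
have hqQ : b * Q <= q * Q by rewrite leq_mul2r hqb orbT.
have hmb : m = b * Q by lia.
exists 1, b, 0; split.
- lia.
- lia.
- by rewrite hmb; exact: repsum_nseq.
- by apply: (repsum_eq (repsum0 b)) => //; lia.
- lia.
Qed.

Definition Pn a b n j := j * (b - 1) * rb b n + a * (rb b n - j).

Lemma gap_below a b n (x : int) : 0 < a -> 1 < b -> 1 < n -> coprime (rb b n) a ->
  ~ inSZ a b n x -> exists j d, [/\ 0 < j < n, inS a b n d & (Posz (Pn a b n j)) = (x + (Posz d))%R].
Proof.
move=> a0 b1 n1 cop hx.
have hR : n <= rb b n by apply: rb_ge; lia.
set R := rb b n in hR cop *.
have cop' : gcdn a R = 1 by rewrite gcdnC; apply/eqP.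
case: (egcdnP R a0) => km kn E _; rewrite cop' in E.
have R0 : (0 < (Posz R))%R by rewrite ltz_nat; lia.
have hxr := modz_ge0 x (lt0r_neq0 R0).
set xr := absz (x %% (Posz R))%Z.
have hxe : x = ((x %/ (Posz R))%Z * (Posz R) + (Posz xr))%R by rewrite /xr gez0_abs // -divz_eq.
set X := (x %/ (Posz R))%Z in hxe.
set m := (km * xr) %% R.
have hm : m < R by rewrite ltn_mod; lia.
set qq := (km * xr) %/ R.
have Ha : a * m + a * qq * R = xr + kn * xr * R.
  have := divn_eq (km * xr) R; rewrite -/m -/qq => h.
  have : a * (km * xr) = (kn * R + 1) * xr by rewrite mulnA [a * km]mulnC E.
  rewrite h mulnDr mulnDl mul1n mulnA; lia.
have hm2 : m < rb b (n - 2).+2 by rewrite (_ : (n - 2).+2 = n) //; lia.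
have [j [k1 [k2 [hj hk h1 h2 h3]]]] := skew b1 hm2.
rewrite (_ : (n - 2).+2 = n) in hj h2 h3; last lia.
rewrite -/R in h2 h3.
set e := k1 * R + a * m.
set f := k2 * R + a * (R - j - m).
have He : inS a b n e := inS_rep a n h1.
have Hf : inS a b n f := inS_rep a n h2.
have Hef : e + f = Pn a b n j + R.
  rewrite /e /f /Pn -/R.
  have : k1 * R + k2 * R = j * (b - 1) * R + R by rewrite -mulnDl hk mulnDl mul1n.
  have : a * m + a * (R - j - m) = a * (R - j) by rewrite -mulnDr; congr (_ * _); lia.
  lia.
set z := (X + (Posz (a * qq)) - (Posz (kn * xr)) - (Posz k1))%R.
have hxz : x = ((Posz e) + z * (Posz R))%R.
  have Ha' : (Posz a * Posz m + Posz a * Posz qq * Posz R = Posz xr + Posz kn * Posz xr * Posz R)%R.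
    by rewrite -!PoszM -!PoszD Ha.
  rewrite /z /e PoszD !PoszM !mulrDl ?mulNr ?PoszM hxe; lia.
case: (boolP (0 <= z)%R) => hz.
  exfalso; apply: hx; exists (e + absz z * R); split.
    by rewrite hxz PoszD PoszM gez0_abs.
  apply: inS_add_closed => //.
  have := inS_rep a n (repsum_nseq b (absz z) 0); by rewrite rb0 !muln0 addn0.
exists j, (f + (absz z - 1) * R); split => //.
- by case/andP: hj => ->; lia.
- apply: inS_add_closed => //.
  have := inS_rep a n (repsum_nseq b (absz z - 1) 0); by rewrite rb0 !muln0 addn0.
- have hz' : (z = - (Posz (absz z)))%R by rewrite abszE ltr0_norm ?opprK // Order.TotalTheory.ltNge.
  have hz1 : 1 <= absz z by move: hz; rewrite -Order.TotalTheory.ltNge; lia.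
  have Hef' : (Posz e + Posz f = Posz (Pn a b n j) + Posz R)%R by rewrite -!PoszD Hef.
  rewrite PoszD PoszM -subzn // hxz {1}hz'; lia.
Qed.

Lemma Pn_int a b n j : 1 < b -> j <= rb b n ->
  Posz (Pn a b n j) = (Posz j * (Posz (b ^ n) - 1 - Posz a) + Posz a * Posz (rb b n))%R.
Proof.
move=> b1 hj.
rewrite -(rb_pow n (ltnW b1)) /Pn !PoszD !PoszM -!subzn //; last lia.
ring.
Qed.

Local Open Scope ring_scope.

Theorem corollary30 (a b n : nat) :
  (0 < a)%N -> (1 < b)%N -> (1 < n)%N -> coprime (rb b n) a ->
  (forall x : int, pseudo_frobenius a b n x <->
     exists2 i : nat, (2 <= i <= n)%N &
       x = ((n - i + 1)%N)%:Z * ((b ^ n)%:Z - 1 - a%:Z) + a%:Z * (rb b n)%:Z)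
  /\ has_type a b n n.-1.
Proof.
move=> a0 b1 n1 cop.
have hR : (n <= rb b n)%N by apply: rb_ge; lia.
have PF : forall x : int, pseudo_frobenius a b n x <->
     exists2 i : nat, (2 <= i <= n)%N &
       x = ((n - i + 1)%N)%:Z * ((b ^ n)%:Z - 1 - a%:Z) + a%:Z * (rb b n)%:Z.
  move=> x; split.
    case=> hx hs.
    have [j [d [hj hd hP]]] := gap_below a0 b1 n1 cop hx.
    case: (d =P 0%N) => [d0|dn0].
      exists (n - j + 1)%N; first lia.
      rewrite (_ : (n - (n - j + 1) + 1 = j)%N); last lia.
      by rewrite -Pn_int ?hP ?d0 ?addr0 //; lia.
    exfalso; have [m [hm hin]] := hs d hd dn0.
    rewrite -hP in hm; case: hm => hm; rewrite -hm in hin.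
    exact: (notin_P a0 b1 n1 cop hj hin).
  case=> i hi ->.
  have hj : (0 < n - i + 1 < n)%N by lia.
  rewrite -Pn_int //; last lia.
  split.
    case=> m [hm hin]; case: hm => hm; rewrite -hm in hin.
    exact: (notin_P a0 b1 n1 cop hj hin).
  move=> s hs s0; exists (Pn a b n (n - i + 1) + s)%N; split; first by rewrite PoszD.
  exact: P_plus.
split => //.
have hD : (b ^ n)%:Z - 1 - a%:Z != 0.
  apply/eqP => hD.
  have e1 : (b ^ n = 1 + a)%N.
    apply/eqP; rewrite -(@eqr_nat int) natrD; apply/eqP; lia.
  move: e1; rewrite -(rb_pow n (ltnW b1)) => e1.
  have e2 : a = ((b - 1) * rb b n)%N by lia.
  move: cop; rewrite e2 /coprime gcdnMl; lia.
exists [seq (Pn a b n j)%:Z | j <- iota 1 n.-1]; split; [|split].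
- rewrite map_inj_in_uniq ?iota_uniq // => j1 j2; rewrite !mem_iota => h1 h2.
  rewrite !Pn_int //; try lia.
  move/addIr => /(mulIf hD) [] //.
- move=> x; rewrite PF; split.
    case=> i hi ->; apply/mapP; exists (n - i + 1)%N; first by rewrite mem_iota; lia.
    by rewrite Pn_int //; lia.
  case/mapP=> j; rewrite mem_iota => hj ->; exists (n - j + 1)%N; first lia.
  rewrite (_ : (n - (n - j + 1) + 1 = j)%N) ?Pn_int //; lia.
- by rewrite size_map size_iota.
Qed.
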